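(* Let $G$ be a $4$-graph, let $A,B\subseteq V(G)$ be disjoint, and suppose $G$ is $\varepsilon$-close to $G^{\mathrm{odd}}(A,B)$ via some $\mathcal T\subseteq\binom{A\cup B}3$, where $\varepsilon\le0.1$. If $x_1x_2\cdots x_{\ell+3}$ is a tight walk in $G^{\mathrm{odd}}(A,B)$ with $\ell\ge6$ such that $\{x_1,x_2,x_3\}\in\mathcal T$ and $\{x_{\ell+1},x_{\ell+2},x_{\ell+3}\}\in\mathcal T$, then there are vertices $y_4,\dots,y_\ell\in V(G)$ such that $x_1x_2x_3y_4\cdots y_\ell x_{\ell+1}x_{\ell+2}x_{\ell+3}$ is a tight walk in $G$.
   Context: A $4$-graph is a $4$-uniform hypergraph. $G^{\mathrm{odd}}(A,B)$ is the $4$-graph on $A\cup B$ whose edges are the $4$-subsets meeting $A$ in an odd number of vertices. A tight walk in a $4$-graph $H$ is a sequence of (not necessarily distinct) vertices $v_1v_2\cdots v_m$, $m\ge4$, such that every four consecutive vertices $v_{i+1},v_{i+2},v_{i+3},v_{i+4}$ form an edge of $H$ (so they are distinct). For a triple $\{x,y,z\}\subseteq A\cup B$, its neighborhood in $G^{\mathrm{odd}}(A,B)$ is $B$ if an odd number of $x,y,z$ lie in $A$ and $A$ otherwise. $\partial\mathcal T$ is the set of pairs contained in some triple of $\mathcal T$. $G$ is $\varepsilon$-close to $G^{\mathrm{odd}}(A,B)$ via $\mathcal T\subseteq\binom{A\cup B}3$ if: (1) for each $\{x,y,z\}\in\mathcal T$ with neighborhood $U\in\{A,B\}$ in $G^{\mathrm{odd}}(A,B)$,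 the number of $u\in U$ with $\{x,y,z,u\}\in E(G)$ is at least $(1-\varepsilon)|U|$; (2) for each $\{x,y\}\in\partial\mathcal T$, the number of $z\in A$ with $\{x,y,z\}\in\mathcal T$ is at least $(1-\varepsilon)|A|$, and the number of $z\in B$ with $\{x,y,z\}\in\mathcal T$ is at least $(1-\varepsilon)|B|$; (3) for each $x\in A\cup B$, the number of $y\in A$ with $\{x,y\}\in\partial\mathcal T$ is at least $(1-\varepsilon)|A|$, and the number of $y\in B$ with $\{x,y\}\in\partial\mathcal T$ is at least $(1-\varepsilon)|B|$. *)

(* Defs.v *)
From mathcomp Require Import all_boot all_order all_algebra.
Set Implicit Arguments. Unset Strict Implicit. Unset Printing Implicit Defensive.
Import Order.TTheory GRing.Theory Num.Theory.

(* A 4-graph on vertex type V is an edge set H : {set {set V}} whose edges all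
   have exactly 4 elements.  Its vertex set is the whole finite type V. *)
Definition is_4graph (V : finType) (H : {set {set V}}) : Prop :=
  forall e, e \in H -> (#|e| = 4)%N.

Definition Godd (V : finType) (A B : {set V}) : {set {set V}} :=
  [set e : {set V} | [&& #|e| == 4%N, e \subset A :|: B & odd #|e :&: A|]].

Definition tight_walk (V : finType) (H : {set {set V}}) (s : seq V) : Prop :=
  (4 <= size s)%N /\
  forall i, (i + 4 <= size s)%N ->
    uniq (take 4 (drop i s)) /\ [set x in take 4 (drop i s)] \in H.

(* neighbourhood of a triple in G^odd(A,B) *)
Definition odd_nbhd (V : finType) (A B : {set V}) (t : {set V}) : {set V} :=
  if odd #|t :&: A| then B else A.

Definition shadow (V : finType) (T : {set {set V}}) : {set {set V}} :=
  [set p : {set V} | (#|p| == 2%N) && [exists t in T, p \subset t]].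

Local Open Scope ring_scope.
Definition eps_close (R : realFieldType) (V : finType) (G : {set {set V}})
    (A B : {set V}) (T : {set {set V}}) (eps : R) : Prop :=
  (forall t, t \in T -> (#|t| = 3)%N /\ t \subset A :|: B) /\
  (forall t, t \in T ->
     (1 - eps) * #|odd_nbhd A B t|%:R
       <= #|[set u in odd_nbhd A B t | t :|: [set u] \in G]|%:R) /\
  (forall p, p \in shadow T ->
     (1 - eps) * #|A|%:R <= #|[set z in A | p :|: [set z] \in T]|%:R /\
     (1 - eps) * #|B|%:R <= #|[set z in B | p :|: [set z] \in T]|%:R) /\
  (forall x, x \in A :|: B ->
     (1 - eps) * #|A|%:R <= #|[set y in A | [set x; y] \in shadow T]|%:R /\
     (1 - eps) * #|B|%:R <= #|[set y in B | [set x; y] \in shadow T]|%:R).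

(* Main.v *)
Require Import Defs.
From mathcomp Require Import all_boot all_order all_algebra.
From mathcomp Require Import zify ring lra.
Set Implicit Arguments. Unset Strict Implicit. Unset Printing Implicit Defensive.
Import Order.TTheory GRing.Theory Num.Theory.

Notation "n .+5" := (n.+4).+1 (left associativity, at level 2, format "n .+5") : nat_scope.
Notation "n .+6" := (n.+5).+1 (left associativity, at level 2, format "n .+6") : nat_scope.
Notation "n .+7" := (n.+6).+1 (left associativity, at level 2, format "n .+7") : nat_scope.
Notation "n .+8" := (n.+7).+1 (left associativity, at level 2, format "n .+8") : nat_scope.
Notation "n .+9" := (n.+8).+1 (left associativity, at level 2, format "n .+9") : nat_scope.

Lemma take_drop_nth (T : Type) (x0 : T) (s : seq T) i k :
  (i + k <= size s)%N -> take k (drop i s) = mkseq (fun j => nth x0 s (i + j)) k.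
Proof.
move=> h; have hs : (k <= size (drop i s))%N by rewrite size_drop; lia.
apply: (@eq_from_nth _ x0); first by rewrite size_takel // size_mkseq.
move=> j; rewrite size_takel // => hjk.
by rewrite nth_take // nth_drop nth_mkseq.
Qed.

Lemma win4 (T : Type) (x0 : T) (s : seq T) i :
  (i + 4 <= size s)%N ->
  take 4 (drop i s) = [:: nth x0 s i; nth x0 s i.+1; nth x0 s i.+2; nth x0 s i.+3].
Proof. by move=> h; rewrite (take_drop_nth x0 h) /mkseq /= ?addn0 ?addn1 ?addn2 ?addn3. Qed.

Lemma card_inter (V : finType) (A : {set V}) (s : seq V) :
  uniq s -> #|[set x in s] :&: A| = count (mem A) s.
Proof.
move=> us.
have -> : [set x in s] :&: A = [set x in filter (mem A) s].
  by apply/setP=> y; rewrite !inE mem_filter andbC.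
rewrite cardsE -size_filter; apply/card_uniqP; exact: filter_uniq.
Qed.

Lemma odd_nbhd3 (V : finType) (A B : {set V}) (s : seq V) :
  uniq s -> odd_nbhd A B [set x in s] = if odd (count (mem A) s) then B else A.
Proof. by move=> us; rewrite /odd_nbhd card_inter. Qed.

Lemma uniq_of_card (V : finType) (s : seq V) : #|[set x in s]| = size s -> uniq s.
Proof. by rewrite cardsE => /card_uniqP. Qed.

Lemma shadow_last2 (V : finType) (T : {set {set V}}) a b c :
  [set x in [:: a; b; c]] \in T -> uniq [:: a; b; c] -> [set x in [:: b; c]] \in shadow T.
Proof.
move=> hT u; rewrite inE; apply/andP; split.
  rewrite cardsE; apply/eqP/card_uniqP; by case/andP: u.
apply/existsP; exists [set x in [:: a; b; c]]; rewrite hT /=.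
by apply/subsetP=> y; rewrite !inE => /orP[->|->]; rewrite !orbT.
Qed.

Lemma shadow_first2 (V : finType) (T : {set {set V}}) a b c :
  [set x in [:: a; b; c]] \in T -> uniq [:: a; b; c] -> [set x in [:: a; b]] \in shadow T.
Proof.
move=> hT u; rewrite inE; apply/andP; split.
  rewrite cardsE; apply/eqP/card_uniqP; move: u => /=; rewrite !inE; 
  by case/andP=> /norP[-> _] _.
apply/existsP; exists [set x in [:: a; b; c]]; rewrite hT /=.
by apply/subsetP=> y; rewrite !inE => /orP[->|->]; rewrite ?orbT.
Qed.

Definition cls (V : finType) (A B : {set V}) (v : V) := if v \in A then A else B.

Lemma cls_type (V : finType) (A B : {set V}) v z :
  [disjoint A & B] -> z \in cls A B v -> (z \in A) = (v \in A).
Proof.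
rewrite /cls => dAB; case: ifP => // vA zB.
by rewrite (disjointFl dAB zB).
Qed.

Lemma cls_in (V : finType) (A B : {set V}) v : v \in A :|: B -> (0 < #|cls A B v|)%N.
Proof.
rewrite inE /cls => /orP[vA|vB]; apply/card_gt0P; exists v; first by rewrite vA.
by case: ifP.
Qed.


Lemma cnt_split (V : finType) (U : {set V}) (P : pred V) :
  (#|[set z in U | P z]| + #|[set z in U | ~~ P z]| = #|U|)%N.
Proof.
rewrite -(cardsID [set z | P z] U); congr (_ + _)%N; apply: eq_card => z;
  by rewrite !inE // andbC.
Qed.

Open Scope ring_scope.
Lemma arith (R : realFieldType) (N c1 c2 c3 c4 g1 g2 g3 g4 eps : R) :
  N <= c1 + c2 + c3 + c4 -> g1 + c1 = N -> g2 + c2 = N -> g3 + c3 = N -> g4 + c4 = N ->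
  0 < N -> (1-eps) * N <= g1 -> (1-eps) * N <= g2 -> (1-eps) * N <= g3 ->
  (1-eps) * N <= g4 -> eps <= 1/10 -> False.
Proof. move=> *; nra. Qed.

Lemma pick4 (R : realFieldType) (V : finType) (U : {set V}) (eps : R)
  (P1 P2 P3 P4 : pred V) :
  (0 < #|U|)%N -> eps <= 1/10 ->
  (1-eps) * #|U|%:R <= #|[set z in U | P1 z]|%:R ->
  (1-eps) * #|U|%:R <= #|[set z in U | P2 z]|%:R ->
  (1-eps) * #|U|%:R <= #|[set z in U | P3 z]|%:R ->
  (1-eps) * #|U|%:R <= #|[set z in U | P4 z]|%:R ->
  exists z, [/\ z \in U, P1 z, P2 z, P3 z & P4 z].
Proof.
move=> U0 he h1 h2 h3 h4.
case: (pickP [pred z | [&& z \in U, P1 z, P2 z, P3 z & P4 z]]) => [z /and5P[? ? ? ? ?]|none].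
  by exists z.
exfalso.
set b1 := [set z in U | ~~ P1 z]; set b2 := [set z in U | ~~ P2 z].
set b3 := [set z in U | ~~ P3 z]; set b4 := [set z in U | ~~ P4 z].
have sub : U \subset b1 :|: b2 :|: b3 :|: b4.
  apply/subsetP=> z zU; have := none z; rewrite /= zU /= !inE zU /=.
  by case: (P1 z); case: (P2 z); case: (P3 z); case: (P4 z).
have c1 := (leq_card_setU b1 b2).1.
have c2 := (leq_card_setU (b1 :|: b2) b3).1.
have c3 := (leq_card_setU (b1 :|: b2 :|: b3) b4).1.
have c0 := subset_leq_card sub.
have hn : (#|U| <= #|b1| + #|b2| + #|b3| + #|b4|)%N by lia.
have e1 := cnt_split U P1; have e2 := cnt_split U P2.
have e3 := cnt_split U P3; have e4 := cnt_split U P4.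
rewrite -/b1 in e1; rewrite -/b2 in e2; rewrite -/b3 in e3; rewrite -/b4 in e4.
have hr : (#|U|%:R <= (#|b1| + #|b2| + #|b3| + #|b4|)%:R :> R) by rewrite ler_nat.
rewrite !natrD in hr.
have r1 : (#|[set z in U | P1 z]|%:R + #|b1|%:R = #|U|%:R :> R) by rewrite -natrD e1.
have r2 : (#|[set z in U | P2 z]|%:R + #|b2|%:R = #|U|%:R :> R) by rewrite -natrD e2.
have r3 : (#|[set z in U | P3 z]|%:R + #|b3|%:R = #|U|%:R :> R) by rewrite -natrD e3.
have r4 : (#|[set z in U | P4 z]|%:R + #|b4|%:R = #|U|%:R :> R) by rewrite -natrD e4.
have n0 : (0 < #|U|%:R :> R) by rewrite ltr0n.
exact: (arith hr r1 r2 r3 r4 n0 h1 h2 h3 h4 he).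
Qed.

Lemma cls_cond (R : realFieldType) (V : finType) (A B : {set V}) (eps : R) (P : pred V) v :
  (1 - eps) * #|A|%:R <= #|[set z in A | P z]|%:R ->
  (1 - eps) * #|B|%:R <= #|[set z in B | P z]|%:R ->
  (1 - eps) * #|cls A B v|%:R <= #|[set z in cls A B v | P z]|%:R.
Proof. by rewrite /cls; case: ifP. Qed.

Ltac seteq := apply/setP => ?; rewrite !inE; repeat (case: (_ == _)) => //.

Ltac nlia := repeat match goal with H : ?P |- _ =>
  match P with
  | is_true (leq _ _) => fail 1
  | is_true (leq _ _ && leq _ _) => fail 1
  | is_true (@eq_op _ (_ : nat) _) => fail 1
  | @eq nat _ _ => fail 1
  | _ => clear H
  end end; lia.

Close Scope ring_scope.
Lemma core (R : realFieldType) (V : finType) (G : {set {set V}})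
  (A B : {set V}) (T : {set {set V}}) (eps : R) (m : nat) (x : nat -> V) :
  is_4graph G -> [disjoint A & B] ->
  eps_close G A B T eps -> (eps <= 1 / 10)%R ->
  (forall i, (i + 4 <= m.+9)%N ->
   [/\ uniq [:: x i; x i.+1; x i.+2; x i.+3],
       odd (count (mem A) [:: x i; x i.+1; x i.+2; x i.+3]) &
       [/\ x i \in A :|: B, x i.+1 \in A :|: B, x i.+2 \in A :|: B & x i.+3 \in A :|: B]]) ->
  [set y in [:: x 0; x 1; x 2]] \in T ->
  [set y in [:: x m.+6; x m.+7; x m.+8]] \in T ->
  exists f : nat -> V,
    [/\ forall i, (i < 3)%N -> f i = x i,
        forall i, (m.+6 <= i)%N -> f i = x i &
        forall i, (i + 4 <= m.+9)%N ->
          [set y in [:: f i; f i.+1; f i.+2; f i.+3]] \in G].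
Proof.
move=> G4 dAB [hT1 [hT2 [hT3 hT4]]] he W h3 hend.
have uT : forall a b c, [set y in [:: a; b; c]] \in T -> uniq [:: a; b; c].
  by move=> a b c /hT1 [hc _]; apply: uniq_of_card.
have fw : forall k, (3 <= k <= m.+3)%N -> exists f : nat -> V,
  [/\ forall i, (i < 3)%N -> f i = x i,
      forall i, (i < k)%N -> (f i \in A) = (x i \in A),
      forall i, (i + 3 <= k)%N -> [set y in [:: f i; f i.+1; f i.+2]] \in T &
      forall i, (i + 4 <= k)%N -> [set y in [:: f i; f i.+1; f i.+2; f i.+3]] \in G].
  elim => [|k IH] hk; first nlia.
  case: (ltnP k 3) => hk3.
    have k2 : k = 2 by nlia.
    subst k; exists x; split => // i hi; last nlia.
    by have -> : i = 0 by nlia.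
  have [f [Ff Af Tf Gf]] := IH (ltac:(nlia)).
  have [j kE] : exists j, k = j.+3 by exists (k - 3); nlia.
  subst k.
  have ht := Tf j (ltac:(nlia)).
  have ut := uT _ _ _ ht.
  have [_ od [_ _ _ xin]] := W j (ltac:(nlia)).
  have nb : odd_nbhd A B [set y in [:: f j; f j.+1; f j.+2]] = cls A B (x j.+3).
    rewrite odd_nbhd3 // /= (Af j) ?(Af j.+1) ?(Af j.+2); try nlia.
    move: od; rewrite /cls /=.
    by case: (x j \in A); case: (x j.+1 \in A); case: (x j.+2 \in A); case: (x j.+3 \in A).
  have sh := shadow_last2 ht ut.
  have c1 := hT2 _ ht; rewrite nb in c1.
  have c2 := @cls_cond R V A B eps (fun z => [set y in [:: f j.+1; f j.+2]] :|: [set z] \in T) (x j.+3) (hT3 _ sh).1 (hT3 _ sh).2.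
  have H0 := @pick4 R V (cls A B (x j.+3)) eps
     (fun z => [set y in [:: f j; f j.+1; f j.+2]] :|: [set z] \in G)
     (fun z => [set y in [:: f j.+1; f j.+2]] :|: [set z] \in T)
     (fun z => [set y in [:: f j; f j.+1; f j.+2]] :|: [set z] \in G)
     (fun z => [set y in [:: f j.+1; f j.+2]] :|: [set z] \in T)
     (cls_in xin) he.
  have [z [zU z1 z2 _ _]] := H0 c1 c2 c1 c2.
  clear H0 c1 c2.
  pose f' := fun i => if i == j.+3 then z else f i.
  have fE : forall i, (i < j.+3)%N -> f' i = f i.
    by move=> i hi; rewrite /f' ifN_eq // neq_ltn hi.
  have fz : f' j.+3 = z by rewrite /f' eqxx.
  exists f'; split.
  - by move=> i hi; rewrite fE ?Ff //; nlia.
  - move=> i hi; case: (ltnP i j.+3) => hij; first by rewrite fE // Af.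
    have -> : i = j.+3 by nlia.
    by rewrite fz (cls_type dAB zU).
  - move=> i hi; case: (ltnP (i + 3) j.+4) => hij.
      rewrite !fE; try nlia; apply: Tf; nlia.
    have -> : i = j.+1 by nlia.
    rewrite fz !fE; try nlia.
    move: z2; rewrite /= => z2.
    have -> : [set y in [:: f j.+1; f j.+2; z]] = [set y in [:: f j.+1; f j.+2]] :|: [set z] by seteq.
    exact: z2.
  - move=> i hi; case: (ltnP (i + 4) j.+4) => hij.
      rewrite !fE; try nlia; apply: Gf; nlia.
    have -> : i = j by nlia.
    rewrite fz !fE; try nlia.
    have -> : [set y in [:: f j; f j.+1; f j.+2; z]] = [set y in [:: f j; f j.+1; f j.+2]] :|: [set z] by seteq.
    exact: z1.
have [f [Ff Af Tf Gf]] := fw m.+3 (ltac:(nlia)).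
clear fw.
have ht0 := Tf m (ltac:(nlia)).
have u0 := uT _ _ _ ht0.
have [_ od0 [_ _ _ xin3]] := W m (ltac:(nlia)).
have [_ od1 [_ _ _ xin4]] := W m.+1 (ltac:(nlia)).
have [_ od2 [_ _ _ xin5]] := W m.+2 (ltac:(nlia)).
have [_ od3 _] := W m.+3 (ltac:(nlia)).
have [_ od4 _] := W m.+4 (ltac:(nlia)).
have [_ od5 [_ x6in _ _]] := W m.+5 (ltac:(nlia)).
have s0 := Af m (ltac:(nlia)).
have s1 := Af m.+1 (ltac:(nlia)).
have s2 := Af m.+2 (ltac:(nlia)).
have nb0 : odd_nbhd A B [set y in [:: f m; f m.+1; f m.+2]] = cls A B (x m.+3).
  rewrite odd_nbhd3 // /= s0 s1 s2.
  move: od0; rewrite /cls /=.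
  by case: (x m \in A); case: (x m.+1 \in A); case: (x m.+2 \in A); case: (x m.+3 \in A).
have sh0 := shadow_last2 ht0 u0.
have ca1 := hT2 _ ht0; rewrite nb0 in ca1.
have ca2 := @cls_cond R V A B eps (fun z => [set y in [:: f m.+1; f m.+2]] :|: [set z] \in T) (x m.+3) (hT3 _ sh0).1 (hT3 _ sh0).2.
have ca3 := @cls_cond R V A B eps (fun z => [set x m.+6; z] \in shadow T) (x m.+3) (hT4 _ x6in).1 (hT4 _ x6in).2.
have H0 := @pick4 R V (cls A B (x m.+3)) eps
  (fun z => [set y in [:: f m; f m.+1; f m.+2]] :|: [set z] \in G)
  (fun z => [set y in [:: f m.+1; f m.+2]] :|: [set z] \in T)
  (fun z => [set x m.+6; z] \in shadow T)
  (fun z => [set y in [:: f m.+1; f m.+2]] :|: [set z] \in T)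
  (cls_in xin3) he.
have [a [aU a1 a2 a3 _]] := H0 ca1 ca2 ca3 ca2.
clear H0 ca1 ca2 ca3.
have sa := cls_type dAB aU.
have tA : [set y in [:: f m.+1; f m.+2; a]] \in T.
  have -> : [set y in [:: f m.+1; f m.+2; a]] = [set y in [:: f m.+1; f m.+2]] :|: [set a] by seteq.
  exact: a2.
have uA := uT _ _ _ tA.
have gA : [set y in [:: f m; f m.+1; f m.+2; a]] \in G.
  have -> : [set y in [:: f m; f m.+1; f m.+2; a]] = [set y in [:: f m; f m.+1; f m.+2]] :|: [set a] by seteq.
  exact: a1.
have nb1 : odd_nbhd A B [set y in [:: f m.+1; f m.+2; a]] = cls A B (x m.+4).
  rewrite odd_nbhd3 // /= s1 s2 sa.
  move: od1; rewrite /cls /=.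
  by case: (x m.+1 \in A); case: (x m.+2 \in A); case: (x m.+3 \in A); case: (x m.+4 \in A).
have shA := shadow_last2 tA uA.
have uE := uT _ _ _ hend.
have shE := shadow_first2 hend uE.
have cb1 := hT2 _ tA; rewrite nb1 in cb1.
have cb2 := @cls_cond R V A B eps (fun z => [set y in [:: f m.+2; a]] :|: [set z] \in T) (x m.+4) (hT3 _ shA).1 (hT3 _ shA).2.
have cb3 := @cls_cond R V A B eps (fun z => [set y in [:: x m.+6; x m.+7]] :|: [set z] \in T) (x m.+4) (hT3 _ shE).1 (hT3 _ shE).2.
have cb4 := @cls_cond R V A B eps (fun z => [set x m.+6; a] :|: [set z] \in T) (x m.+4) (hT3 _ a3).1 (hT3 _ a3).2.
have H0 := @pick4 R V (cls A B (x m.+4)) eps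
  (fun z => [set y in [:: f m.+1; f m.+2; a]] :|: [set z] \in G)
  (fun z => [set y in [:: f m.+2; a]] :|: [set z] \in T)
  (fun z => [set y in [:: x m.+6; x m.+7]] :|: [set z] \in T)
  (fun z => [set x m.+6; a] :|: [set z] \in T)
  (cls_in xin4) he.
have [b [bU b1 b2 b3 b4]] := H0 cb1 cb2 cb3 cb4.
clear H0 cb1 cb2 cb3 cb4.
have sb := cls_type dAB bU.
have tB : [set y in [:: f m.+2; a; b]] \in T.
  have -> : [set y in [:: f m.+2; a; b]] = [set y in [:: f m.+2; a]] :|: [set b] by seteq.
  exact: b2.
have tC : [set y in [:: x m.+6; x m.+7; b]] \in T.
  have -> : [set y in [:: x m.+6; x m.+7; b]] = [set y in [:: x m.+6; x m.+7]] :|: [set b] by seteq.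
  exact: b3.
have tD : [set y in [:: x m.+6; a; b]] \in T.
  have -> : [set y in [:: x m.+6; a; b]] = [set x m.+6; a] :|: [set b] by seteq.
  exact: b4.
have gB : [set y in [:: f m.+1; f m.+2; a; b]] \in G.
  have -> : [set y in [:: f m.+1; f m.+2; a; b]] = [set y in [:: f m.+1; f m.+2; a]] :|: [set b] by seteq.
  exact: b1.
have uB := uT _ _ _ tB.
have uC := uT _ _ _ tC.
have uD := uT _ _ _ tD.
have nbB : odd_nbhd A B [set y in [:: f m.+2; a; b]] = cls A B (x m.+5).
  rewrite odd_nbhd3 // /= s2 sa sb.
  move: od2; rewrite /cls /=.
  by case: (x m.+2 \in A); case: (x m.+3 \in A); case: (x m.+4 \in A); case: (x m.+5 \in A).
have nbD : odd_nbhd A B [set y in [:: x m.+6; a; b]] = cls A B (x m.+5).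
  rewrite odd_nbhd3 // /= sa sb.
  move: od3; rewrite /cls /=.
  by case: (x m.+3 \in A); case: (x m.+4 \in A); case: (x m.+5 \in A); case: (x m.+6 \in A).
have nbC : odd_nbhd A B [set y in [:: x m.+6; x m.+7; b]] = cls A B (x m.+5).
  rewrite odd_nbhd3 // /= sb.
  move: od4; rewrite /cls /=.
  by case: (x m.+4 \in A); case: (x m.+5 \in A); case: (x m.+6 \in A); case: (x m.+7 \in A).
have nbE : odd_nbhd A B [set y in [:: x m.+6; x m.+7; x m.+8]] = cls A B (x m.+5).
  rewrite odd_nbhd3 //=.
  move: od5; rewrite /cls /=.
  by case: (x m.+5 \in A); case: (x m.+6 \in A); case: (x m.+7 \in A); case: (x m.+8 \in A).
have cc1 := hT2 _ tB; rewrite nbB in cc1.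
have cc2 := hT2 _ tD; rewrite nbD in cc2.
have cc3 := hT2 _ tC; rewrite nbC in cc3.
have cc4 := hT2 _ hend; rewrite nbE in cc4.
have H0 := @pick4 R V (cls A B (x m.+5)) eps
  (fun z => [set y in [:: f m.+2; a; b]] :|: [set z] \in G)
  (fun z => [set y in [:: x m.+6; a; b]] :|: [set z] \in G)
  (fun z => [set y in [:: x m.+6; x m.+7; b]] :|: [set z] \in G)
  (fun z => [set y in [:: x m.+6; x m.+7; x m.+8]] :|: [set z] \in G)
  (cls_in xin5) he.
have [c [cU c1 c2 c3 c4]] := H0 cc1 cc2 cc3 cc4.
clear H0 cc1 cc2 cc3 cc4.
pose g := fun i => if (i < m.+3)%N then f i else if i == m.+3 then a
  else if i == m.+4 then b else if i == m.+5 then c else x i.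
have gl : forall i, (i < m.+3)%N -> g i = f i by move=> i hi; rewrite /g hi.
have g3 : g m.+3 = a by rewrite /g ltnn eqxx.
have g4 : g m.+4 = b.
  have L1 : (m.+4 < m.+3)%N = false by nlia.
  have L2 : (m.+4 == m.+3) = false by nlia.
  by rewrite /g L1 L2 eqxx.
have g5 : g m.+5 = c.
  have L1 : (m.+5 < m.+3)%N = false by nlia.
  have L2 : (m.+5 == m.+3) = false by nlia.
  have L3 : (m.+5 == m.+4) = false by nlia.
  by rewrite /g L1 L2 L3 eqxx.
have gx : forall i, (m.+6 <= i)%N -> g i = x i.
  move=> i hi.
  have L1 : (i < m.+3)%N = false by nlia.
  have L2 : (i == m.+3) = false by nlia.
  have L3 : (i == m.+4) = false by nlia.
  have L4 : (i == m.+5) = false by nlia.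
  by rewrite /g L1 L2 L3 L4.
have gm0 := gl m (ltac:(nlia)).
have gm1 := gl m.+1 (ltac:(nlia)).
have gm2 := gl m.+2 (ltac:(nlia)).
have g6 := gx m.+6 (ltac:(nlia)).
have g7 := gx m.+7 (ltac:(nlia)).
have g8 := gx m.+8 (ltac:(nlia)).
exists g; split.
- move=> i hi; have e := gl i (ltac:(nlia)); rewrite e; exact: Ff.
- exact: gx.
move=> i hi; case: (ltnP (i + 4) m.+4) => hi'.
  rewrite !gl; try nlia; apply: Gf; nlia.
have : i = m \/ i = m.+1 \/ i = m.+2 \/ i = m.+3 \/ i = m.+4 \/ i = m.+5 by nlia.
case=> [->|[->|[->|[->|[->|->]]]]]; rewrite ?gm0 ?gm1 ?gm2 ?g3 ?g4 ?g5 ?g6 ?g7 ?g8.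
- exact: gA.
- exact: gB.
- have -> : [set y in [:: f m.+2; a; b; c]] = [set y in [:: f m.+2; a; b]] :|: [set c] by seteq.
  exact: c1.
- have -> : [set y in [:: a; b; c; x m.+6]] = [set y in [:: x m.+6; a; b]] :|: [set c] by seteq.
  exact: c2.
- have -> : [set y in [:: b; c; x m.+6; x m.+7]] = [set y in [:: x m.+6; x m.+7; b]] :|: [set c] by seteq.
  exact: c3.
- have -> : [set y in [:: c; x m.+6; x m.+7; x m.+8]] = [set y in [:: x m.+6; x m.+7; x m.+8]] :|: [set c] by seteq.
  exact: c4.
Qed.

Lemma take3 (T : Type) (x0 : T) (s : seq T) :
  (3 <= size s)%N -> take 3 s = [:: nth x0 s 0; nth x0 s 1; nth x0 s 2].
Proof.
by move=> h; rewrite -{1}(drop0 s) (take_drop_nth x0) /=.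
Qed.

Lemma dropn3 (T : Type) (x0 : T) (s : seq T) n :
  size s = (n + 3)%N -> drop n s = [:: nth x0 s n; nth x0 s n.+1; nth x0 s n.+2].
Proof.
move=> h; rewrite -(take_oversize (n := 3) (s := drop n s)); last by rewrite size_drop h addKn.
by rewrite (take_drop_nth x0) ?h // /mkseq /= addn0 addn1 addn2.
Qed.

Unset Implicit Arguments.
Open Scope ring_scope.
Theorem lemma6p5 (R : realFieldType) (V : finType) (G : {set {set V}})
  (A B : {set V}) (T : {set {set V}}) (eps : R) (l : nat) (xs : seq V) :
  is_4graph G -> [disjoint A & B] ->
  eps_close G A B T eps -> eps <= 1 / 10 ->
  (6 <= l)%N -> size xs = (l + 3)%N ->
  tight_walk (Godd A B) xs ->
  [set x in take 3 xs] \in T ->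
  [set x in drop l xs] \in T ->
  exists ys : seq V, size ys = (l - 3)%N /\
    tight_walk G (take 3 xs ++ ys ++ drop l xs).
Proof.
move=> G4 dAB hc he hl hsz tw h3 hl3.
have [x0 _] : exists x0 : V, True.
  move: hsz; case: (xs) => [|y ys] hs; last by exists y.
  by rewrite addn3 in hs.
have [m lE] : exists m, l = m.+6 by exists (l - 6)%N; nlia.
subst l.
have hsz' : size xs = m.+9 by rewrite hsz; nlia.
have W : forall i, (i + 4 <= m.+9)%N ->
   [/\ uniq [:: nth x0 xs i; nth x0 xs i.+1; nth x0 xs i.+2; nth x0 xs i.+3],
       odd (count (mem A) [:: nth x0 xs i; nth x0 xs i.+1; nth x0 xs i.+2; nth x0 xs i.+3]) &
       [/\ nth x0 xs i \in A :|: B, nth x0 xs i.+1 \in A :|: B,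
           nth x0 xs i.+2 \in A :|: B & nth x0 xs i.+3 \in A :|: B]].
  move=> i hi; have [_ tw2] := tw.
  have hi2 : (i + 4 <= size xs)%N by rewrite hsz'.
  have := tw2 i hi2; rewrite (win4 x0 hi2) => -[u]; rewrite inE => /and3P[_ sub od].
  split => //; first by rewrite -card_inter.
  by split; apply: (subsetP sub); rewrite !inE eqxx ?orbT.
have h3' : [set y in [:: nth x0 xs 0; nth x0 xs 1; nth x0 xs 2]] \in T.
  by rewrite -(take3 x0) // hsz'.
have e6 := dropn3 x0 hsz.
have hend : [set y in [:: nth x0 xs m.+6; nth x0 xs m.+7; nth x0 xs m.+8]] \in T.
  by rewrite -e6.
have [g [g1 g2 g3]] := core G4 dAB hc he W h3' hend.
pose zs := mkseq g m.+9.
have ezs : take 3 xs ++ take m.+3 (drop 3 zs) ++ drop m.+6 xs = zs.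
  have t3 : take 3 xs = take 3 zs.
    rewrite (take3 x0) ?hsz' // (take3 x0) ?size_mkseq // /zs !nth_mkseq //.
    by rewrite !g1.
  have d6 : drop m.+6 xs = drop m.+6 zs.
    have szs : size zs = (m.+6 + 3)%N by rewrite size_mkseq addn3.
    rewrite e6 (dropn3 x0 szs) /zs !nth_mkseq; try nlia.
    rewrite !g2 //; nlia.
  rewrite t3 d6 -{4}(cat_take_drop 3 zs); congr (_ ++ _).
  by rewrite -{2}(cat_take_drop m.+3 (drop 3 zs)) drop_drop addn3.
exists (take m.+3 (drop 3 zs)); split.
  have hs : (m.+3 <= size (drop 3 zs))%N by rewrite size_drop size_mkseq; nlia.
  rewrite (size_takel hs); nlia.
rewrite ezs; split; first by rewrite size_mkseq.
move=> i; rewrite size_mkseq => hi.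
have hi2 : (i + 4 <= size zs)%N by rewrite size_mkseq.
rewrite (win4 x0 hi2) /zs !nth_mkseq; try nlia.
have hG := g3 i hi; split => //.
apply: uniq_of_card; exact: G4.
Qed.
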